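(* There exists a tightly $\sigma$-filtered Boolean algebra of cardinality $\mathfrak{c}$ that has the countable separation property.
   Context: A Boolean algebra $\mathfrak{B}$ has the countable separation property if for every two countable sets $X,Y\subseteq\mathfrak{B}$ with $x\le y$ for all $x\in X$, $y\in Y$, there is $z\in\mathfrak{B}$ with $x\le z\le y$ for all $x\in X$, $y\in Y$. For a subset $X$ of a Boolean algebra, $\langle X\rangle$ is the subalgebra generated by $X$. Two subalgebras $A,S$ of a Boolean algebra commute if whenever $a\in A$, $s\in S$ and $a\wedge s=0$, there exist $b_1,b_2\in A\cap S$ with $a\le b_1$, $s\le b_2$, $b_1\wedge b_2=0$. A square of inclusions $R\subseteq A\subseteq B$, $R\subseteq S\subseteq B$ is a push-out diagram if $\langle A\cup S\rangle=B$, $A\cap S=R$, and $A$ and $S$ commute. A Boolean algebra $\mathfrak{B}$ is tightly $\sigma$-filtered if there is an increasing chain of subalgebras $(B_\alpha)_{\alpha<\xi}$ indexed by an ordinal $\xi$ with: $B_0=\{0,1\}$; $\mathfrak{B}=\bigcup_{\alpha<\xi}B_\alpha$; $B_\alpha=\bigcup_{\beta<\alpha}B_\beta$ for limit $\alpha$; and for every $\alpha<\xi$ there are countable subalgebras $R_\alpha,S_\alpha\subseteq\mathfrak{B}$ such that the inclusions $R_\alpha\subseteq B_\alpha\subseteq B_{\alpha+1}$, $R_\alpha\subseteq S_\alpha\subseteq B_{\alpha+1}$ form a push-out diagram. *)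

(* Defs.v *)
(* a Boolean algebra is a complemented distributive lattice
   with top and bottom, i.e. an Order.ctbDistrLatticeType. Subsets of the
   algebra are Prop-valued predicates. *)
From HB Require Import structures.
From mathcomp Require Import all_boot all_order.
Set Implicit Arguments. Unset Strict Implicit. Unset Printing Implicit Defensive.
Import Order.TTheory.
Local Open Scope order_scope.

Section BooleanAlgebraNotions.
Context {disp : Order.disp_t} {B : ctbDistrLatticeType disp}.

Definition bsubset (X Y : B -> Prop) : Prop := forall x, X x -> Y x.

Definition countable_set (X : B -> Prop) : Prop :=
  exists f : B -> nat, forall x y, X x -> X y -> f x = f y -> x = y.

Definition subalgebra (A : B -> Prop) : Prop :=
  [/\ A \bot, A \top,
      (forall x y, A x -> A y -> A (x `&` y)),
      (forall x y, A x -> A y -> A (x `|` y)) &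
      (forall x, A x -> A (~` x))].

Definition generated (X : B -> Prop) : B -> Prop :=
  fun b => forall A, subalgebra A -> bsubset X A -> A b.

Definition commute (A S : B -> Prop) : Prop :=
  forall a s, A a -> S s -> a `&` s = \bot ->
    exists b1 b2, [/\ A b1 /\ S b1, A b2 /\ S b2, a <= b1, s <= b2 &
                      b1 `&` b2 = \bot].

Definition pushout (R A S C : B -> Prop) : Prop :=
  [/\ bsubset R A /\ bsubset A C, bsubset R S /\ bsubset S C,
      (forall x, generated (fun y => A y \/ S y) x <-> C x),
      (forall x, (A x /\ S x) <-> R x) &
      commute A S].

Definition countable_separation : Prop :=
  forall X Y : B -> Prop, countable_set X -> countable_set Y ->
    (forall x y, X x -> Y y -> x <= y) ->
    exists z, (forall x, X x -> x <= z) /\ (forall y, Y y -> z <= y).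

(* The ordinal xi is represented by a well-ordered
   index type (I, lt); B_{alpha+1} is B_beta for the immediate successor beta
   of alpha, and the whole algebra when alpha is the largest index
   (convention B_xi = B). *)
Definition tightly_sigma_filtered : Prop :=
  exists (I : Type) (lt : I -> I -> Prop) (Bc : I -> B -> Prop),
    [/\
        (forall i, ~ lt i i) /\ (forall i j k, lt i j -> lt j k -> lt i k) /\
        (forall i j, lt i j \/ i = j \/ lt j i) /\ well_founded lt,
        (forall i, subalgebra (Bc i)) /\
        (forall i j, lt i j -> bsubset (Bc i) (Bc j)) /\
        (forall x, exists i, Bc i x),
        (forall i, (forall j, ~ lt j i) ->
           forall x, Bc i x <-> (x = \bot \/ x = \top)),
        (forall a, (exists b, lt b a) ->
           (forall b, lt b a -> exists c, lt b c /\ lt c a) ->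
           forall x, Bc a x <-> exists b, lt b a /\ Bc b x) &
        (forall a, exists R S : B -> Prop,
           [/\ subalgebra R /\ countable_set R,
               subalgebra S /\ countable_set S,
               (forall b, lt a b -> (forall c, ~ (lt a c /\ lt c b)) ->
                  pushout R (Bc a) S (Bc b)) &
               ((forall b, ~ lt a b) -> pushout R (Bc a) S (fun _ => True))])].

End BooleanAlgebraNotions.

Arguments countable_separation {disp} B.
Arguments tightly_sigma_filtered {disp} B.

(* Main.v *)
Require Import Defs.
From HB Require Import structures.
From mathcomp Require Import all_boot all_order.
From mathcomp Require Import boolp wochoice.
Set Implicit Arguments. Unset Strict Implicit. Unset Printing Implicit Defensive.

Definition W := nat -> bool.

Definition RW : rel W := proj1_sig (well_ordering_principle W).
Lemma RW_wo (A : {pred W}) : nonempty A -> exists! z, minimum_of RW A z.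
Proof. exact: (proj2_sig (well_ordering_principle W)). Qed.

Lemma RW_min (A : W -> Prop) : (exists x, A x) -> exists z, A z /\ forall x, A x -> RW z x.
Proof.
move=> [x Ax].
have [|z [[zA lb] _]] := @RW_wo [pred y | `[< A y >]].
  by exists x; rewrite inE; apply/asboolP.
exists z; split; first by move: zA; rewrite inE => /asboolP.
by move=> y Ay; apply: lb; rewrite inE; apply/asboolP.
Qed.

Arguments RW_min : clear implicits.

Lemma RW_unique (A : W -> Prop) z1 z2 : A z1 -> A z2 ->
  (forall x, A x -> RW z1 x) -> (forall x, A x -> RW z2 x) -> z1 = z2.
Proof.
move=> A1 A2 l1 l2.
have [|z [_ U]] := @RW_wo [pred y | `[< A y >]].
  by exists z1; rewrite inE; apply/asboolP.
have H: forall w, A w -> (forall x, A x -> RW w x) -> w = z.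
  move=> w Aw lw; apply/esym/U; split; first by rewrite inE; apply/asboolP.
  by move=> x; rewrite inE => /asboolP; apply: lw.
by rewrite (H z1) // (H z2).
Qed.

Arguments RW_unique : clear implicits.

Lemma RW_total x y : RW x y \/ RW y x.
Proof.
have [|z [Az lz]] := RW_min (fun w => w = x \/ w = y); first by exists x; left.
by case: Az => <-; [left|right]; apply: lz; auto.
Qed.

Lemma RW_refl x : RW x x.
Proof. by case: (RW_total x x). Qed.

Lemma RW_anti x y : RW x y -> RW y x -> x = y.
Proof.
move=> xy yx; apply: (RW_unique (fun w => w = x \/ w = y)); auto.
- by move=> w [->|->]; [apply: RW_refl|].
- by move=> w [->|->]; [|apply: RW_refl].
Qed.

Lemma RW_trans x y z : RW x y -> RW y z -> RW x z.
Proof.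
move=> xy yz.
have [|m [Am lm]] := RW_min (fun w => w = x \/ w = y \/ w = z); first by exists x; left.
case: Am => [E|[E|E]]; subst m; first by apply: lm; auto.
- have yx : RW y x by apply: lm; auto.
  by rewrite (RW_anti xy yx).
- have zy : RW z y by apply: lm; auto.
  by rewrite -(RW_anti yz zy).
Qed.
Lemma NNPP (P : Prop) : ~ ~ P -> P.
Proof. by case: (pselect P) => // p H; case: H. Qed.

Definition cnt (A : W -> Prop) :=
  exists e : W -> nat, forall x y, A x -> A y -> e x = e y -> x = y.

Lemma cnt_sub (A B : W -> Prop) : (forall x, A x -> B x) -> cnt B -> cnt A.
Proof. by move=> AB [e He]; exists e => x y Ax Ay; apply: He; apply: AB. Qed.

Lemma cnt_union (A : nat -> W -> Prop) : (forall k, cnt (A k)) ->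
  cnt (fun x => exists k, A k x).
Proof.
move=> H; have [e He] := choice H.
have : forall x : W, exists k : nat, (exists k', A k' x) -> A k x.
  move=> x; case: (pselect (exists k, A k x)) => [[k Hk']|N]; first by exists k.
  by exists 0%N => Ex; case: N.
move=> /choice [kk Hkk].
exists (fun x => pickle (kk x, e (kk x) x)) => x y Ax Ay /(pcan_inj pickleK) [E1 E2].
apply: (He (kk x)); [exact: Hkk|rewrite E1; exact: Hkk|by rewrite {2}E1].
Qed.

Lemma cnt_add1 (A : W -> Prop) w0 : cnt A -> cnt (fun x => A x \/ x = w0).
Proof.
move=> [e He]; exists (fun x => if `[< x = w0 >] then 0%N else (e x).+1).
move=> x y Ax Ay; case: (asboolP (x = w0)) => [->|nx];
  case: (asboolP (y = w0)) => [->|ny] //.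
move=> [] /He; apply; [by case: Ax | by case: Ay].
Qed.

Lemma W_uncnt : ~ cnt (fun _ => True).
Proof.
move=> [e He].
have : forall n : nat, exists o : option W, (exists x, e x = n) -> exists x, o = Some x /\ e x = n.
  move=> n; case: (pselect (exists x, e x = n)) => [[x Hx]|N].
    by exists (Some x) => _; exists x.
  by exists None => Ex; case: N.
move=> /choice [inv Hinv].
pose d : W := fun n => if inv n is Some x then ~~ x n else false.
have [x [Ex1 Ex2]] := Hinv (e d) (ex_intro _ d erefl).
have xd : x = d by apply: He.
have : d (e d) = ~~ d (e d) by rewrite {1}/d Ex1 xd.
by case: (d (e d)).
Qed.

Definition ltW (x y : W) := RW x y /\ x <> y.

Lemma ltW_trich x y : ltW x y \/ x = y \/ ltW y x.
Proof.
case: (pselect (x = y)) => [->|nxy]; first by right; left.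
case: (RW_total x y) => H; [left|right; right]; split => //; by auto.
Qed.

Lemma ltW_trans x y z : ltW x y -> ltW y z -> ltW x z.
Proof.
move=> [xy nxy] [yz nyz]; split; first exact: RW_trans xy yz.
move=> E; subst z; apply: nxy; exact: RW_anti.
Qed.

Lemma ltW_irr x : ~ ltW x x.
Proof. by case. Qed.

Lemma ltW_wf : well_founded ltW.
Proof.
move=> x; apply: NNPP => Nx.
have [z [Nz lz]] := RW_min (fun y => ~ Acc ltW y) (ex_intro _ x Nx).
apply: Nz; constructor => y [yz nyz]; apply: NNPP => Ny.
by apply: nyz; apply: RW_anti => //; apply: lz.
Qed.

Definition inO (w : W) := cnt (fun v => RW v w).
Definition O1 := {w : W | inO w}.
Definition ltO (a b : O1) := ltW (proj1_sig a) (proj1_sig b).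

Lemma O1_inj (a b : O1) : proj1_sig a = proj1_sig b -> a = b.
Proof. by case: a b => [a pa] [b pb] /= E; subst b; congr exist. Qed.

Lemma O1_avoid (U : W -> Prop) : cnt U -> exists w, inO w /\ ~ U w.
Proof.
move=> cU; apply: NNPP => N.
have HU : forall w, inO w -> U w.
  by move=> w Iw; apply: NNPP => Uw; apply: N; exists w.
case: (pselect (exists w, ~ inO w)) => [Ex|NEx].
  have [w0 [Nw0 lw0]] := RW_min _ Ex.
  apply: Nw0; apply: (cnt_sub (B := fun x => U x \/ x = w0)); last exact: cnt_add1.
  move=> v vw0; case: (pselect (v = w0)) => [->|nv]; first by right.
  left; apply: HU; apply: NNPP => Nv.
  by apply: nv; apply: RW_anti => //; apply: lw0.
apply: W_uncnt; apply: (cnt_sub (B := U)) => // x _; apply: HU.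
by apply: NNPP => Nx; apply: NEx; exists x.
Qed.

Lemma O1_bound (c : nat -> O1) : exists xi : O1, forall k, ltO (c k) xi.
Proof.
have cU : cnt (fun v => exists k, RW v (proj1_sig (c k))).
  by apply: cnt_union => k; exact: (proj2_sig (c k)).
have [w [Iw Nw]] := O1_avoid cU.
exists (exist _ w Iw) => k; rewrite /ltO /=.
case: (RW_total w (proj1_sig (c k))) => H; first by case: Nw; exists k.
split => // E; apply: Nw; exists k; rewrite E; exact: RW_refl.
Qed.

Lemma O1_ex : exists a : O1, True.
Proof.
have [|w [Iw _]] := @O1_avoid (fun _ => False); first by exists (fun _ => 0%N).
by exists (exist _ w Iw).
Qed.
Definition o0 : O1 := projT1 (cid O1_ex).

Lemma ltO_wf : well_founded ltO.
Proof.
have H : forall x : W, forall a : O1, proj1_sig a = x -> Acc ltO a.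
  move=> x; elim/(well_founded_ind ltW_wf): x => x IH a Ea.
  by constructor => b ba; apply: (IH (proj1_sig b)) => //; rewrite -Ea.
by move=> a; apply: (H _ a erefl).
Qed.

Lemma ltO_trich a b : ltO a b \/ a = b \/ ltO b a.
Proof.
case: (ltW_trich (proj1_sig a) (proj1_sig b)) => [H|[H|H]]; [left|right;left|right;right] => //.
exact: O1_inj.
Qed.

Lemma ltO_trans a b c : ltO a b -> ltO b c -> ltO a c.
Proof. exact: ltW_trans. Qed.
Lemma ltO_irr a : ~ ltO a a.
Proof. exact: ltW_irr. Qed.

Definition I : Type := (O1 * W)%type.
Definition ltI (a b : I) := ltO a.1 b.1 \/ (a.1 = b.1 /\ ltW a.2 b.2).

Lemma ltI_wf : well_founded ltI.
Proof.
have H : forall a1 : O1, forall w, Acc ltI (a1, w).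
  move=> a1; elim/(well_founded_ind ltO_wf): a1 => a1 IH1 w.
  elim/(well_founded_ind ltW_wf): w => w IH2.
  constructor => [[b1 b2]] [/= H|[/= E H]]; first exact: IH1.
  by subst b1; apply: IH2.
by case=> a1 w; apply: H.
Qed.

Lemma ltI_irr a : ~ ltI a a.
Proof. by case=> [/ltO_irr|[_ /ltW_irr]]. Qed.

Lemma ltI_trans a b c : ltI a b -> ltI b c -> ltI a c.
Proof.
case=> [H1|[E1 H1]] [H2|[E2 H2]]; rewrite /ltI.
- by left; exact: ltO_trans H1 H2.
- by left; rewrite -E2.
- by left; rewrite E1.
- by right; split; [rewrite E1 E2|exact: ltW_trans H1 H2].
Qed.

Lemma ltI_trich a b : ltI a b \/ a = b \/ ltI b a.
Proof.
case: a b => [a1 a2] [b1 b2]; rewrite /ltI /=.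
case: (ltO_trich a1 b1) => [H|[E|H]]; [by left; left| |by right; right; left].
subst b1; case: (ltW_trich a2 b2) => [H|[E|H]]; [by left; right| |by right; right; right].
by subst; right; left.
Qed.

Lemma ltI_nomax a : exists b, ltI a b.
Proof.
have [xi H] := O1_bound (fun _ => a.1); exists (xi, a.2); left; exact: H 0%N.
Qed.

Definition i0 : I := (o0, fun _ => false).

Inductive term (V : Type) :=
| tV of V | t0 | t1 | tM of term V & term V | tJ of term V & term V | tC of term V.
Arguments tV {V}. Arguments t0 {V}. Arguments t1 {V}.
Arguments tM {V}. Arguments tJ {V}. Arguments tC {V}.

Fixpoint eval {V} (p : V -> bool) (t : term V) : bool :=
  match t with
  | tV v => p v | t0 => false | t1 => true
  | tM a b => eval p a && eval p b
  | tJ a b => eval p a || eval p b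
  | tC a => ~~ eval p a
  end.

Fixpoint allv {V} (P : V -> Prop) (t : term V) : Prop :=
  match t with
  | tV v => P v | t0 => True | t1 => True
  | tM a b => allv P a /\ allv P b
  | tJ a b => allv P a /\ allv P b
  | tC a => allv P a
  end.

Lemma allv_impl {V} (P Q : V -> Prop) t : (forall v, P v -> Q v) -> allv P t -> allv Q t.
Proof. by move=> PQ; elim: t => //= *; intuition. Qed.

Lemma eval_ext {V} (P : V -> Prop) p q t : (forall v, P v -> p v = q v) -> allv P t ->
  eval p t = eval q t.
Proof.
move=> H; elim: t => [v| | |a IHa b IHb|a IHa b IHb|a IHa] //=.
- exact: H.
- by case=> ha hb; rewrite IHa ?IHb.
- by case=> ha hb; rewrite IHa ?IHb.
- by move=> h; rewrite IHa.
Qed.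

(* encodings into W *)
Definition wcons (b : bool) (w : W) : W := fun n => if n is n'.+1 then w n' else b.
Lemma wcons_inj b w b' w' : wcons b w = wcons b' w' -> b = b' /\ w = w'.
Proof.
move=> E; split; first exact: (congr1 (fun f => f 0%N) E).
by apply: funext => n; exact: (congr1 (fun f => f n.+1) E).
Qed.

Definition pairW (a b : W) : W := fun n => if odd n then b n./2 else a n./2.
Lemma pairW_inj a b a' b' : pairW a b = pairW a' b' -> a = a' /\ b = b'.
Proof.
move=> E; split; apply: funext => n.
- have := congr1 (fun f => f n.*2) E; rewrite /pairW odd_double doubleK; done.
- have := congr1 (fun f => f n.*2.+1) E; rewrite /pairW /= odd_double /= uphalf_double; done.
Qed.

Definition tg (b0 b1 b2 : bool) (w : W) := wcons b0 (wcons b1 (wcons b2 w)).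
Lemma tg_inj b0 b1 b2 w c0 c1 c2 w' : tg b0 b1 b2 w = tg c0 c1 c2 w' ->
  [/\ b0 = c0, b1 = c1, b2 = c2 & w = w'].
Proof. by move=> /wcons_inj [-> /wcons_inj [-> /wcons_inj [-> ->]]]. Qed.

Definition encI (a : I) : W := pairW (proj1_sig a.1) a.2.
Lemma encI_inj : injective encI.
Proof.
case=> [a1 a2] [b1 b2] /pairW_inj [E1 E2] /=.
by move: E1 E2 => /= /O1_inj -> ->.
Qed.

Fixpoint encT (t : term I) : W :=
  match t with
  | tV i => tg false false false (encI i)
  | t0 => tg true false false (fun _ => false)
  | t1 => tg false true false (fun _ => false)
  | tM a b => tg true true false (pairW (encT a) (encT b))
  | tJ a b => tg false false true (pairW (encT a) (encT b))
  | tC a => tg true false true (encT a)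
  end.

Lemma encT_inj : injective encT.
Proof.
elim=> [i| | |a IHa b IHb|a IHa b IHb|a IHa] [j| | |c d|c d|c] /= /tg_inj [] //.
- by move=> _ _ _ /encI_inj ->.
- by move=> _ _ _ /pairW_inj [/IHa -> /IHb ->].
- by move=> _ _ _ /pairW_inj [/IHa -> /IHb ->].
- by move=> _ _ _ /IHa ->.
Qed.

Definition unp (k : nat) : nat * nat := odflt (0%N, 0%N) (unpickle k).
Lemma unp_pickle n j : unp (pickle (n, j)) = (n, j).
Proof. by rewrite /unp pickleK. Qed.

Definition seqW (f : nat -> W) : W := fun k => f (unp k).1 (unp k).2.
Lemma seqW_inj : injective seqW.
Proof.
move=> f g E; apply: funext => n; apply: funext => j.
have := congr1 (fun h => h (pickle (n, j))) E; by rewrite /seqW unp_pickle.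
Qed.

Definition Pair := ((nat -> term I) * (nat -> term I))%type.
Definition encP (P : Pair) : W :=
  pairW (seqW (fun n => encT (P.1 n))) (seqW (fun n => encT (P.2 n))).
Lemma encP_inj : injective encP.
Proof.
case=> [f g] [f' g'] /pairW_inj [/seqW_inj E1 /seqW_inj E2].
congr pair; apply: funext => n; apply: encT_inj.
  exact: (congr1 (fun h => h n) E1).
exact: (congr1 (fun h => h n) E2).
Qed.

Definition dec (w : W) : Pair :=
  match pselect (exists P, encP P = w) with
  | left h => projT1 (cid h)
  | right _ => (fun _ => t0, fun _ => t1)
  end.
Lemma dec_encP P : dec (encP P) = P.
Proof.
rewrite /dec; case: pselect => [h|N]; last by case: N; exists P.
by case: (cid h) => Q /= /encP_inj.
Qed.

Definition Xf (g : I) : nat -> term I := (dec g.2).1.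
Definition Yf (g : I) : nat -> term I := (dec g.2).2.

Lemma term_bound (t : term I) : exists a : O1, allv (fun v => ltO v.1 a) t.
Proof.
elim: t => [v| | |a [x Hx] b [y Hy]|a [x Hx] b [y Hy]|a [x Hx]] /=.
- by have [xi H] := O1_bound (fun _ => v.1); exists xi; exact: H 0%N.
- by exists o0.
- by exists o0.
- case: (ltO_trich x y) => [H|[E|H]].
  + by exists y; split => //; apply: allv_impl Hx => v h; exact: ltO_trans h H.
  + by subst y; exists x.
  + by exists x; split => //; apply: allv_impl Hy => v h; exact: ltO_trans h H.
- case: (ltO_trich x y) => [H|[E|H]].
  + by exists y; split => //; apply: allv_impl Hx => v h; exact: ltO_trans h H.
  + by subst y; exists x.
  + by exists x; split => //; apply: allv_impl Hy => v h; exact: ltO_trans h H.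
- by exists x.
Qed.

Lemma bookkeeping (f g : nat -> term I) : exists gm : I,
  (forall n, allv (fun v => ltI v gm) (f n) /\ allv (fun v => ltI v gm) (g n)) /\
  Xf gm = f /\ Yf gm = g.
Proof.
have [a Ha] := choice (fun n => term_bound (f n)).
have [b Hb] := choice (fun n => term_bound (g n)).
have [xi Hxi] := O1_bound (fun k => if odd k then b k./2 else a k./2).
exists (xi, encP (f, g)); split; last by rewrite /Xf /Yf /= dec_encP.
move=> n; split.
- apply: allv_impl (Ha n) => v h; left => /=; apply: ltO_trans h _.
  by have := Hxi n.*2; rewrite odd_double doubleK.
- apply: allv_impl (Hb n) => v h; left => /=; apply: ltO_trans h _.
  by have := Hxi n.*2.+1; rewrite /= odd_double /= uphalf_double.
Qed.

Definition hF (w : W) : I :=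
  (o0, encP (fun _ => t0, fun n => if w n then t1 else tC t0)).
Lemma hF_inj : injective hF.
Proof.
move=> w w' [] /encP_inj [] E; apply: funext => n.
by have := congr1 (fun h => h n) E; case: (w n); case: (w' n).
Qed.
Lemma hF_free w n p : eval p (Xf (hF w) n) = false /\ eval p (Yf (hF w) n) = true.
Proof. by rewrite /Xf /Yf /hF /= dec_encP /=; case: (w n). Qed.

Definition constr (b : I) (p : I -> bool) :=
  (forall n, eval p (Xf b n) -> p b) /\ (forall n, p b -> eval p (Yf b n)).
Definition below (g : I) (t : term I) := allv (fun v => ltI v g) t.

Definition actF (g : I) (rec : forall b, ltI b g -> Prop) : Prop :=
  (forall n, below g (Xf g n) /\ below g (Yf g n)) /\
  forall p : I -> bool, (forall b (h : ltI b g), rec b h -> constr b p) ->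
    forall n m, eval p (Xf g n) -> eval p (Yf g m).
Definition act : I -> Prop := Fix ltI_wf (fun _ => Prop) actF.

Lemma actE g : act g = @actF g (fun b _ => act b).
Proof.
rewrite /act Fix_eq //.
move=> x f h E; have -> : f = h; last by [].
apply: functional_extensionality_dep => y; apply: functional_extensionality_dep => py.
exact: E.
Qed.

Lemma act_below g : act g -> forall n, below g (Xf g n) /\ below g (Yf g n).
Proof. by rewrite actE => -[]. Qed.

Lemma act_ord g : act g -> forall p, (forall b, ltI b g -> act b -> constr b p) ->
  forall n m, eval p (Xf g n) -> eval p (Yf g m).
Proof. by rewrite actE => -[_ H] p Hp; apply: H => b h; apply: Hp. Qed.

Lemma act_intro g : (forall n, below g (Xf g n) /\ below g (Yf g n)) ->
  (forall p, (forall b, ltI b g -> act b -> constr b p) ->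
    forall n m, eval p (Xf g n) -> eval p (Yf g m)) -> act g.
Proof. by move=> H1 H2; rewrite actE; split => // p Hp; apply: H2 => b h; apply: Hp. Qed.

Definition Om (p : I -> bool) := forall b, act b -> constr b p.

Lemma wfrec (G : I -> (I -> bool) -> bool) :
  (forall d r r', (forall b, ltI b d -> r b = r' b) -> G d r = G d r') ->
  exists q, forall d, q d = G d q.
Proof.
move=> Gloc.
pose F d (rec : forall b, ltI b d -> bool) :=
  G d (fun b => match pselect (ltI b d) with left h => rec b h | right _ => false end).
exists (Fix ltI_wf (fun _ => bool) F) => d.
rewrite Fix_eq; last first.
  move=> x f h E; rewrite /F; congr (G x _); apply: funext => b.
  by case: pselect => // hb; apply: E.
rewrite /F; apply: Gloc => b hb; by case: pselect.
Qed.

Definition restr (d : I) (r : I -> bool) : I -> bool :=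
  fun b => if `[< ltI b d >] then r b else false.

Lemma eval_restr d r t : below d t -> eval (restr d r) t = eval r t.
Proof.
move=> H; apply: (eval_ext (P := fun v => ltI v d)) => // v hv.
by rewrite /restr; case: asboolP.
Qed.

Lemma extend (D : I -> Prop) (p : I -> bool) :
  (forall a b, ltI a b -> D b -> D a) ->
  (forall b, D b -> act b -> constr b p) ->
  exists q, Om q /\ forall b, D b -> q b = p b.
Proof.
move=> Ddown Dp.
pose G d r := if `[< D d >] then p d else `[< exists n, eval (restr d r) (Xf d n) >].
have [|q Hq] := @wfrec G.
  move=> d r r' E; rewrite /G; case: asboolP => // _.
  have -> : restr d r = restr d r' => //.
  by apply: funext => b; rewrite /restr; case: asboolP => // h; apply: E.
have qD : forall b, D b -> q b = p b.
  by move=> b Db; rewrite Hq /G; case: asboolP.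
exists q; split => //.
move=> b; elim/(well_founded_ind ltI_wf): b => b IH ab.
have [bX bY] := (fun n => proj1 (act_below ab n), fun n => proj2 (act_below ab n)).
case: (pselect (D b)) => Db.
  have Eq : forall t, below b t -> eval q t = eval p t.
    move=> t bt; apply: (eval_ext (P := fun v => ltI v b)) => // v hv.
    by apply: qD; apply: Ddown hv Db.
  have [c1 c2] := Dp b Db ab.
  split => n; rewrite (qD _ Db) Eq //; [exact: c1|exact: c2].
have qb : q b = `[< exists n, eval q (Xf b n) >].
  rewrite Hq /G; case: asboolP => // _.
  congr (asbool _); apply: propext; split => -[n hn]; exists n; move: hn;
  by rewrite eval_restr.
split => n.
  by move=> h; rewrite qb; apply/asboolP; exists n.
rewrite qb => /asboolP [n0 h0].
by apply: (act_ord ab (p := q)) h0 => b' hb' ab'; apply: IH.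
Qed.

Definition cset (t : term I) : (I -> bool) -> Prop := fun p => Om p /\ eval p t.
Record Bt := MkB { bval : (I -> bool) -> Prop ; bprop : exists t, bval = cset t }.
Definition cls (t : term I) : Bt := MkB (ex_intro _ t erefl).
Definition rep (x : Bt) : term I := projT1 (cid (bprop x)).

Lemma Bt_ext (x y : Bt) : bval x = bval y -> x = y.
Proof.
case: x y => [vx px] [vy py] /= E; subst vy.
by rewrite (Prop_irrelevance px py).
Qed.

Lemma repK x : cls (rep x) = x.
Proof. by apply: Bt_ext; rewrite /rep /=; case: cid. Qed.

Lemma clsP s t : cls s = cls t <-> forall p, Om p -> eval p s = eval p t.
Proof.
split.
  move=> /(congr1 bval) /= E p Hp.
  have := congr1 (fun P => P p) E; rewrite /cset => E2.
  apply/idP/idP => h.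
    by have [] : Om p /\ eval p t by rewrite -E2.
  by have [] : Om p /\ eval p s by rewrite E2.
move=> H; apply: Bt_ext => /=; apply: funext => p; apply: propext; rewrite /cset.
by split => -[Hp h]; split => //; rewrite ?H // -H.
Qed.

Lemma clsW (P : Bt -> Prop) : (forall t, P (cls t)) -> forall x, P x.
Proof. by move=> H x; rewrite -(repK x). Qed.

Lemma rep_cls t p : Om p -> eval p (rep (cls t)) = eval p t.
Proof. by move=> Hp; apply: (proj1 (clsP (rep (cls t)) t) (repK _)). Qed.

Definition bmeet x y := cls (tM (rep x) (rep y)).
Definition bjoin x y := cls (tJ (rep x) (rep y)).
Definition bcompl x := cls (tC (rep x)).
Definition bbot := cls t0.
Definition btop := cls t1.

Lemma bmeetE s t : bmeet (cls s) (cls t) = cls (tM s t).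
Proof. by apply/clsP => p Hp /=; rewrite !rep_cls. Qed.
Lemma bjoinE s t : bjoin (cls s) (cls t) = cls (tJ s t).
Proof. by apply/clsP => p Hp /=; rewrite !rep_cls. Qed.
Lemma bcomplE s : bcompl (cls s) = cls (tC s).
Proof. by apply/clsP => p Hp /=; rewrite !rep_cls. Qed.

HB.instance Definition _ := gen_eqMixin Bt.
HB.instance Definition _ := gen_choiceMixin Bt.

Definition ble (x y : Bt) : bool := bmeet x y == x.
Definition blt (x y : Bt) : bool := (y != x) && ble x y.

Ltac bsolve := repeat (let t := fresh "t" in elim/clsW => t);
  rewrite ?bcomplE ?bjoinE ?bmeetE; apply/clsP => p Hp /=;
  match goal with H : Om _ |- _ => rewrite ?(rep_cls _ H) end.

Lemma bmeetC : commutative bmeet.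
Proof. by bsolve; rewrite andbC. Qed.
Lemma bjoinC : commutative bjoin.
Proof. by bsolve; rewrite orbC. Qed.
Lemma bmeetA : associative bmeet.
Proof. by bsolve; rewrite andbA. Qed.
Lemma bjoinA : associative bjoin.
Proof. by bsolve; rewrite orbA. Qed.
Lemma bjoinKI y x : bmeet x (bjoin x y) = x.
Proof. by move: y x; bsolve; case: (eval p _). Qed.
Lemma bmeetKU y x : bjoin x (bmeet x y) = x.
Proof. by move: y x; bsolve; case: (eval p _). Qed.
Lemma bmeetUl : left_distributive bmeet bjoin.
Proof. by bsolve; case: (eval p _); case: (eval p _); case: (eval p _). Qed.
Lemma bmeetxx : idempotent_op bmeet.
Proof. by bsolve; rewrite andbb. Qed.

Definition dsp : Order.disp_t := Order.Disp tt tt.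

HB.instance Definition _ := @Order.isMeetJoinDistrLattice.Build dsp Bt
  ble blt bmeet bjoin (fun _ _ => erefl) (fun _ _ => erefl)
  bmeetC bjoinC bmeetA bjoinA bjoinKI bmeetKU bmeetUl bmeetxx.

Lemma bleP s t : reflect (forall p, Om p -> eval p s -> eval p t) (ble (cls s) (cls t)).
Proof.
apply: (iffP eqP); rewrite bmeetE.
  by move/clsP => H p Hp hs; have := H p Hp; rewrite /= hs.
by move=> H; apply/clsP => p Hp /=; case E: (eval p s) => //=; apply: H.
Qed.

Lemma ble0x x : ble bbot x.
Proof. by elim/clsW: x => t; apply/bleP. Qed.
Lemma blex1 x : ble x btop.
Proof. by elim/clsW: x => t; apply/bleP. Qed.

HB.instance Definition _ := @Order.hasBottom.Build dsp Bt bbot ble0x.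
HB.instance Definition _ := @Order.hasTop.Build dsp Bt btop blex1.

Lemma bjoinxC x : bjoin x (bcompl x) = btop.
Proof. by move: x; bsolve; case: (eval p _). Qed.
Lemma bmeetxC x : bmeet x (bcompl x) = bbot.
Proof. by move: x; bsolve; case: (eval p _). Qed.

HB.instance Definition _ := @Order.TBDistrLattice_hasComplement.Build dsp Bt
  bcompl bjoinxC bmeetxC.


Lemma meetE (x y : Bt) : Order.meet x y = bmeet x y. Proof. by []. Qed.
Lemma joinE (x y : Bt) : Order.join x y = bjoin x y. Proof. by []. Qed.
Lemma complE (x : Bt) : Order.compl x = bcompl x. Proof. by []. Qed.
Lemma botE : (Order.bottom : Bt) = bbot. Proof. by []. Qed.
Lemma topE : (Order.top : Bt) = btop. Proof. by []. Qed.
Lemma leE (x y : Bt) : Order.le x y = ble x y. Proof. by []. Qed.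

Definition Bc (g : I) (x : Bt) : Prop := exists t, below g t /\ x = cls t.

Lemma below_le g h t : (ltI g h \/ g = h) -> below g t -> below h t.
Proof.
case=> [gh|<-] //; apply: allv_impl => v vg; exact: ltI_trans vg gh.
Qed.

Lemma two_max g h : exists k, (ltI g k \/ g = k) /\ (ltI h k \/ h = k) /\ (k = g \/ k = h).
Proof.
case: (ltI_trich g h) => [H|[<-|H]]; first by exists h; auto.
  by exists g; auto.
by exists g; auto.
Qed.

Lemma Bc_sub g : subalgebra (Bc g).
Proof.
split.
- by exists t0.
- by exists t1.
- move=> x y [s [hs ->]] [t [ht ->]]; exists (tM s t); split; first by split.
  by rewrite meetE bmeetE.
- move=> x y [s [hs ->]] [t [ht ->]]; exists (tJ s t); split; first by split.
  by rewrite joinE bjoinE.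
- move=> x [s [hs ->]]; exists (tC s); split => //.
  by rewrite complE bcomplE.
Qed.

Lemma below_ex t : exists g, below g t.
Proof.
elim: t => [v| | |a [g1 H1] b [g2 H2]|a [g1 H1] b [g2 H2]|a [g1 H1]] /=.
- exact: ltI_nomax.
- by exists i0.
- by exists i0.
- have [k [k1 [k2 _]]] := two_max g1 g2; exists k; split; [exact: below_le H1|exact: below_le H2].
- have [k [k1 [k2 _]]] := two_max g1 g2; exists k; split; [exact: below_le H1|exact: below_le H2].
- by exists g1.
Qed.

Lemma below_min i t : (forall j, ~ ltI j i) -> below i t -> forall p q, eval p t = eval q t.
Proof.
move=> Hi bt p q; apply: (eval_ext (P := fun v => ltI v i)) => // v hv.
by case: (Hi v).
Qed.

Lemma below_limit a t : (exists b, ltI b a) ->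
  (forall b, ltI b a -> exists c, ltI b c /\ ltI c a) -> below a t ->
  exists b, ltI b a /\ below b t.
Proof.
move=> [b0 hb0] lim.
elim: t => [v| | |s IHs t IHt|s IHs t IHt|s IHs] /=.
- by move=> /lim [c [vc ca]]; exists c.
- by exists b0.
- by exists b0.
- move=> [/IHs [g1 [l1 H1]] /IHt [g2 [l2 H2]]].
  have [k [k1 [k2 Ek]]] := two_max g1 g2; exists k; split;
    [by case: Ek => ->|by split; [exact: below_le H1|exact: below_le H2]].
- move=> [/IHs [g1 [l1 H1]] /IHt [g2 [l2 H2]]].
  have [k [k1 [k2 Ek]]] := two_max g1 g2; exists k; split;
    [by case: Ek => ->|by split; [exact: below_le H1|exact: below_le H2]].
- by move=> /IHs.
Qed.

Lemma ble_sem x y : ble x y <-> forall p, Om p -> eval p (rep x) -> eval p (rep y).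
Proof.
rewrite -{1}(repK x) -{1}(repK y); split; first by move/bleP.
by move=> H; apply/bleP.
Qed.

Lemma bleIl x y : ble (bmeet x y) x.
Proof. by move: x y; do 2 elim/clsW => ?; rewrite bmeetE; apply/bleP => p _ /andP[]. Qed.
Lemma bleIr x y : ble (bmeet x y) y.
Proof. by move: x y; do 2 elim/clsW => ?; rewrite bmeetE; apply/bleP => p _ /andP[]. Qed.
Lemma blexI z x y : ble z x -> ble z y -> ble z (bmeet x y).
Proof.
move: z x y; do 3 elim/clsW => ?; rewrite bmeetE => /bleP h1 /bleP h2.
by apply/bleP => p Hp h /=; rewrite h1 ?h2.
Qed.
Lemma ble_trans x y z : ble x y -> ble y z -> ble x z.
Proof.
move: x y z; do 3 elim/clsW => ?; move=> /bleP h1 /bleP h2.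
by apply/bleP => p Hp h; apply: h2 => //; apply: h1.
Qed.
Lemma ble_refl x : ble x x.
Proof. by elim/clsW: x => t; apply/bleP. Qed.
Lemma blecompl f x : ble (bmeet f (bcompl x)) bbot -> ble f x.
Proof.
move: f x; do 2 elim/clsW => ?; rewrite bcomplE bmeetE => /bleP h.
apply/bleP => p Hp hf; have := h p Hp; rewrite /= hf /=.
by case: (eval p _) => // /(_ isT).
Qed.
Lemma bmeetC0 x : ble (bmeet x (bcompl x)) bbot.
Proof. by elim/clsW: x => t; rewrite bcomplE bmeetE; apply/bleP => p _ /=; case: (eval p t). Qed.
Lemma bjoin0 a b : ble (bmeet (bjoin a b) (bmeet (bcompl a) (bcompl b))) bbot.
Proof.
move: a b; do 2 elim/clsW => ?; rewrite !bcomplE bjoinE !bmeetE.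
by apply/bleP => p _ /=; case: (eval p _); case: (eval p _).
Qed.

Definition isF (F : Bt -> Prop) :=
  [/\ (forall x y, F x -> F y -> F (bmeet x y)), (forall x y, F x -> ble x y -> F y) & ~ F bbot].

Fixpoint bigM (c : nat -> term I) (N : nat) : term I :=
  if N is N'.+1 then tM (bigM c N') (c N) else c 0%N.

Lemma eval_bigM p c N : eval p (bigM c N) <-> forall n, (n <= N)%N -> eval p (c n).
Proof.
elim: N => [|N IH] /=.
  by split => [h n|h]; [rewrite leqn0 => /eqP -> | apply: h].
split.
  move=> /andP [/IH h1 h2] n; rewrite leq_eqVlt => /orP [/eqP ->|] //.
  by rewrite ltnS; apply: h1.
by move=> h; apply/andP; split; [apply/IH => n hn; apply: h; apply: leqW|apply: h].
Qed.

Lemma ultra (F0 : Bt -> Prop) : isF F0 -> F0 btop -> exists U, isF U /\ (forall x, F0 x -> U x) /\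
  forall x, U x \/ U (bcompl x).
Proof.
move=> F0F F0T.
pose S : {pred (Bt -> Prop)} := [pred F | `[< isF F /\ forall x, F0 x -> F x >]].
pose R : rel (Bt -> Prop) := fun F G => `[< forall x, F x -> G x >].
have [| | |U SU maxU] := @Zorn's_lemma _ R S.
- by move=> F _; apply/asboolP.
- move=> F G H _ _ _ /asboolP h1 /asboolP h2; apply/asboolP => x /h1; exact: h2.
- move=> C sCS /wo_chainW Cch.
  case: (pselect (exists F, F \in C)) => [[G0 CG0]|NC]; last first.
    exists F0; first by rewrite inE; apply/asboolP.
    by move=> F CF; case: NC; exists F.
  pose Un x := exists F, F \in C /\ F x.
  have CS : forall F, F \in C -> isF F /\ forall x, F0 x -> F x.
    by move=> F /sCS; rewrite inE => /asboolP.
  exists Un; last by move=> F CF; apply/asboolP => x Fx; exists F.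
  rewrite inE; apply/asboolP; split; last first.
    by move=> x /(proj2 (CS _ CG0)) h; exists G0.
  split.
  + move=> x y [F [CF Fx]] [G [CG Gy]].
    case/orP: (Cch F G CF CG) => /asboolP h.
      by exists G; split => //; case: (proj1 (CS _ CG)) => Hm _ _; apply: Hm => //; apply: h.
    by exists F; split => //; case: (proj1 (CS _ CF)) => Hm _ _; apply: Hm => //; apply: h.
  + move=> x y [F [CF Fx]] xy; exists F; split => //.
    by case: (proj1 (CS _ CF)) => _ Hu _; exact: Hu Fx xy.
  + by move=> [F [CF Fb]]; case: (proj1 (CS _ CF)) => _ _; apply.
move: SU; rewrite inE => /asboolP [[Um Uup Unb] F0U].
exists U; split => //; split => // x.
case: (pselect (U x)) => Ux; [by left|right].
pose U' y := exists f, U f /\ ble (bmeet f (bcompl x)) y.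
have U'F : isF U' /\ forall y, F0 y -> U' y.
  split; last by move=> y /F0U Uy; exists y; split => //; exact: bleIl.
  split.
  - move=> y z [f [Uf hf]] [g [Ug hg]]; exists (bmeet f g); split; first exact: Um.
    apply: blexI.
      apply: ble_trans hf; apply: blexI; [apply: ble_trans (bleIl _ _) (bleIl _ _)|exact: bleIr].
    apply: ble_trans hg; apply: blexI; [apply: ble_trans (bleIl _ _) (bleIr _ _)|exact: bleIr].
  - by move=> y z [f [Uf hf]] yz; exists f; split => //; exact: ble_trans hf yz.
  - by move=> [f [Uf /blecompl hf]]; apply: Ux; exact: Uup Uf hf.
have UU' : R U U' by apply/asboolP => y Uy; exists y; split => //; exact: bleIl.
have SU' : U' \in S by rewrite inE; apply/asboolP.
have /asboolP h := maxU U' SU' UU'.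
apply: h; exists btop; split; [exact: F0U|exact: bleIr].
Qed.

Lemma compact (c : nat -> term I) :
  (forall N, exists p, Om p /\ forall n, (n <= N)%N -> eval p (c n)) ->
  exists p, Om p /\ forall n, eval p (c n).
Proof.
move=> Hfin.
pose F0 x := exists N, ble (cls (bigM c N)) x.
have mono : forall N M, (N <= M)%N -> ble (cls (bigM c M)) (cls (bigM c N)).
  move=> N M NM; apply/bleP => p _ /eval_bigM h; apply/eval_bigM => n nN.
  by apply: h; exact: leq_trans nN NM.
have F0F : isF F0.
  split.
  - move=> x y [N1 h1] [N2 h2]; exists (maxn N1 N2); apply: blexI.
      by apply: ble_trans h1; apply: mono; exact: leq_maxl.
    by apply: ble_trans h2; apply: mono; exact: leq_maxr.
  - by move=> x y [N h] xy; exists N; exact: ble_trans h xy.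
  - move=> [N /bleP h]; have [p [Hp Hc]] := Hfin N.
    by have := h p Hp (proj2 (eval_bigM p c N) Hc).
have [U [[Um Uup Unb] [F0U Upr]]] := ultra F0F (ex_intro _ 0%N (blex1 _)).
have Utop : U btop by apply: F0U; exists 0%N; exact: blex1.
have UM : forall x y, U (bmeet x y) <-> U x /\ U y.
  move=> x y; split; last by case=> ??; exact: Um.
  by move=> h; split; [exact: Uup h (bleIl _ _)|exact: Uup h (bleIr _ _)].
have UC : forall x, U (bcompl x) <-> ~ U x.
  move=> x; split; last by case: (Upr x).
  by move=> h1 h2; apply: Unb; apply: Uup (Um _ _ h2 h1) (bmeetC0 _).
have UJ : forall x y, U (bjoin x y) <-> U x \/ U y.
  move=> x y; split; last first.
    have l1 : ble x (bjoin x y).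
      by move: x y; do 2 elim/clsW => ?; rewrite bjoinE; apply/bleP => p _ /= ->.
    have l2 : ble y (bjoin x y).
      by clear l1; move: x y; do 2 elim/clsW => ?; rewrite bjoinE; apply/bleP => p _ /= ->; rewrite orbT.
    by case=> h; [apply: Uup h l1|apply: Uup h l2].
  move=> h; case: (pselect (U x)) => hx; [by left|right].
  apply: NNPP => hy; apply: (Unb).
  apply: (Uup _ _ _ (bjoin0 x y)); apply: (Um _ _ h); apply: (Um _ _); exact/UC.
pose pU : I -> bool := fun v => `[< U (cls (tV v)) >].
have evalU : forall t, eval pU t = `[< U (cls t) >].
  elim=> [v| | |a IHa b IHb|a IHa b IHb|a IHa] //=.
  - by case: asboolP.
  - by case: asboolP.
  - rewrite IHa IHb -bmeetE; apply/idP/idP.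
      by move=> /andP [/asboolP ? /asboolP ?]; apply/asboolP; apply/UM.
    by move=> /asboolP /UM [? ?]; apply/andP; split; apply/asboolP.
  - rewrite IHa IHb -bjoinE; apply/idP/idP.
      by move=> /orP [/asboolP ?|/asboolP ?]; apply/asboolP; apply/UJ; auto.
    by move=> /asboolP /UJ [?|?]; apply/orP; [left|right]; apply/asboolP.
  - rewrite IHa -bcomplE; apply/idP/idP.
      by move=> /asboolP h; apply/asboolP; apply/UC.
    by move=> /asboolP /UC h; apply/asboolP.
exists pU; split.
  move=> b ab; split => n.
    rewrite evalU => /asboolP h; rewrite /pU; apply/asboolP; apply: Uup h _.
    by apply/bleP => p Hp; case: (Hp b ab) => h1 _; apply: h1.
  rewrite /pU evalU => /asboolP h; apply/asboolP; apply: Uup h _.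
  by apply/bleP => p Hp /=; case: (Hp b ab) => _ h2; apply: h2.
move=> n; rewrite evalU; apply/asboolP; apply: F0U; exists n.
by apply/bleP => p _ /eval_bigM; apply.
Qed.

Fixpoint inT (v : I) (t : term I) : Prop :=
  match t with
  | tV u => u = v | t0 => False | t1 => False
  | tM a b => inT v a \/ inT v b | tJ a b => inT v a \/ inT v b
  | tC a => inT v a
  end.
Definition Vs (a v : I) := exists n, inT v (Xf a n) \/ inT v (Yf a n).
Definition okR (a v : I) := ltI v a /\ Vs a v.
Definition okS (a v : I) := v = a \/ okR a v.
Definition Sset (a : I) (x : Bt) := exists t, allv (okS a) t /\ x = cls t.
Definition Rset (a : I) (x : Bt) := Bc a x /\ Sset a x.

Lemma allv_inT t : allv (fun v => inT v t) t.
Proof.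
elim: t => [v| | |a IHa b IHb|a IHa b IHb|a IHa] //=.
- by split; [apply: allv_impl IHa|apply: allv_impl IHb] => v; auto.
- by split; [apply: allv_impl IHa|apply: allv_impl IHb] => v; auto.
Qed.

Lemma allv_and {V} (P Q : V -> Prop) t : allv P t -> allv Q t -> allv (fun v => P v /\ Q v) t.
Proof. by elim: t => //= *; intuition. Qed.

Lemma okR_below a t : allv (okR a) t -> below a t.
Proof. by apply: allv_impl => v []. Qed.
Lemma okR_okS a t : allv (okR a) t -> allv (okS a) t.
Proof. by apply: allv_impl => v h; right. Qed.

Lemma Sset_sub a : subalgebra (Sset a).
Proof.
split.
- by exists t0.
- by exists t1.
- move=> x y [s [hs ->]] [t [ht ->]]; exists (tM s t); split; first by split.
  by rewrite meetE bmeetE.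
- move=> x y [s [hs ->]] [t [ht ->]]; exists (tJ s t); split; first by split.
  by rewrite joinE bjoinE.
- move=> x [s [hs ->]]; exists (tC s); split => //.
  by rewrite complE bcomplE.
Qed.

Lemma subalg_I (A C : Bt -> Prop) : subalgebra A -> subalgebra C ->
  subalgebra (fun x => A x /\ C x).
Proof.
move=> [a1 a2 a3 a4 a5] [c1 c2 c3 c4 c5]; split => //.
- by move=> x y [] ?? [] ??; split; auto.
- by move=> x y [] ?? [] ??; split; auto.
- by move=> x [] ??; split; auto.
Qed.

(* countability of Sset a *)
Fixpoint getv (t : term I) (k : nat) : I :=
  match t with
  | tV v => v
  | tM a b => if odd k then getv b k./2 else getv a k./2
  | tJ a b => if odd k then getv b k./2 else getv a k./2
  | tC a => getv a k
  | _ => i0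
  end.

Lemma getv_inT v t : inT v t -> exists k, getv t k = v.
Proof.
elim: t => [u| | |a IHa b IHb|a IHa b IHb|a IHa] //=.
- by move=> ->; exists 0%N.
- case=> [/IHa [k hk]|/IHb [k hk]].
    by exists k.*2; rewrite odd_double doubleK.
  by exists k.*2.+1; rewrite /= odd_double /= uphalf_double.
- case=> [/IHa [k hk]|/IHb [k hk]].
    by exists k.*2; rewrite odd_double doubleK.
  by exists k.*2.+1; rewrite /= odd_double /= uphalf_double.
Qed.

Definition nu (a : I) (k : nat) : I :=
  match (unp k).2 with
  | 0%N => a
  | i.+1 => if odd i then getv (Yf a (unp k).1) i./2 else getv (Xf a (unp k).1) i./2
  end.

Lemma nu_onto a v : okS a v -> exists k, nu a k = v.
Proof.
case=> [->|[_ [n [h|h]]]].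
- by exists (pickle (0%N, 0%N)); rewrite /nu unp_pickle.
- have [k hk] := getv_inT h; exists (pickle (n, k.*2.+1)).
  by rewrite /nu unp_pickle /= odd_double doubleK.
- have [k hk] := getv_inT h; exists (pickle (n, k.*2.+2)).
  by rewrite /nu unp_pickle /= odd_double /= uphalf_double.
Qed.

Fixpoint tmap {V V'} (f : V -> V') (t : term V) : term V' :=
  match t with
  | tV v => tV (f v) | t0 => t0 | t1 => t1
  | tM a b => tM (tmap f a) (tmap f b) | tJ a b => tJ (tmap f a) (tmap f b)
  | tC a => tC (tmap f a)
  end.

Lemma tmapK {V V'} (f : V -> V') (g : V' -> V) t :
  allv (fun v => g (f v) = v) t -> tmap g (tmap f t) = t.
Proof.
elim: t => [v| | |a IHa b IHb|a IHa b IHb|a IHa] //=.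
- by move=> ->.
- by case=> /IHa -> /IHb ->.
- by case=> /IHa -> /IHb ->.
- by move=> /IHa ->.
Qed.

Fixpoint tcode (t : term nat) : GenTree.tree nat :=
  match t with
  | tV n => GenTree.Leaf n
  | t0 => GenTree.Node 0 [::]
  | t1 => GenTree.Node 1 [::]
  | tM a b => GenTree.Node 2 [:: tcode a; tcode b]
  | tJ a b => GenTree.Node 3 [:: tcode a; tcode b]
  | tC a => GenTree.Node 4 [:: tcode a]
  end.

Lemma tcode_inj : injective tcode.
Proof.
elim=> [n| | |a IHa b IHb|a IHa b IHb|a IHa] [m| | |c d|c d|c] //=.
- by case=> ->.
- by case=> /IHa -> /IHb ->.
- by case=> /IHa -> /IHb ->.
- by case=> /IHa ->.
Qed.

Lemma Sset_cnt a : countable_set (Sset a).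
Proof.
have [iota Hiota] : exists iota : I -> nat, forall v, okS a v -> nu a (iota v) = v.
  have H : forall v : I, exists k, okS a v -> nu a k = v.
    move=> v; case: (pselect (okS a v)) => [/nu_onto [k hk]|N]; first by exists k.
    by exists 0%N.
  by case/choice: H => f hf; exists f.
pose eS (x : Bt) : nat :=
  match pselect (Sset a x) with
  | left h => pickle (tcode (tmap iota (projT1 (cid h))))
  | right _ => 0%N
  end.
exists eS => x y Sx Sy; rewrite /eS.
case: pselect => // hx; case: pselect => // hy.
case: (cid hx) => tx [hx1 hx2]; case: (cid hy) => ty [hy1 hy2] /=.
move=> /(pcan_inj pickleK) /tcode_inj E.
rewrite hx2 hy2 -(tmapK (f := iota) (g := nu a) (t := tx)) ?E ?tmapK //.
  by apply: allv_impl hy1 => v /Hiota.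
by apply: allv_impl hx1 => v /Hiota.
Qed.

Fixpoint tsub (a : I) (c : term I) (t : term I) : term I :=
  match t with
  | tV v => if `[< v = a >] then c else tV v
  | t0 => t0 | t1 => t1
  | tM x y => tM (tsub a c x) (tsub a c y)
  | tJ x y => tJ (tsub a c x) (tsub a c y)
  | tC x => tC (tsub a c x)
  end.

Definition upd (p : I -> bool) (a : I) (b : bool) : I -> bool :=
  fun v => if `[< v = a >] then b else p v.

Lemma eval_tsub p a c t : eval p (tsub a c t) = eval (upd p a (eval p c)) t.
Proof.
elim: t => [v| | |x IHx y IHy|x IHx y IHy|x IHx] //=; try by rewrite IHx ?IHy.
by rewrite /upd; case: asboolP.
Qed.

Lemma shannon p a t :
  eval p t = if p a then eval p (tsub a t1 t) else eval p (tsub a t0 t).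
Proof.
rewrite !eval_tsub /=.
have E : forall b, p a = b -> eval p t = eval (upd p a b) t.
  move=> b pab; apply: (eval_ext (P := fun _ => True)); last by elim: t => //=.
  by move=> v _; rewrite /upd; case: asboolP => // ->.
by case: (p a) (E (p a) erefl) => ->.
Qed.

Lemma allv_tsub a c t : allv (okS a) t -> allv (okR a) c -> allv (okR a) (tsub a c t).
Proof.
move=> + hc; elim: t => [v| | |x IHx y IHy|x IHx y IHy|x IHx] //=.
- by case: asboolP => // nv [//|h].
- by case=> /IHx ? /IHy ?.
- by case=> /IHx ? /IHy ?.
Qed.

Lemma eval_upd_below p a b t : below a t -> eval (upd p a b) t = eval p t.
Proof.
move=> h; apply: (eval_ext (P := fun v => ltI v a)) => // v hv.
by rewrite /upd; case: asboolP => // E; subst v; case: (ltI_irr hv).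
Qed.

Lemma ext_at a p bv : Om p -> (act a -> constr a (upd p a bv)) ->
  exists q, Om q /\ (forall v, ltI v a -> q v = p v) /\ q a = bv.
Proof.
move=> Hp Ha.
have [| |q [Oq Hq]] := @extend (fun v => ltI v a \/ v = a) (upd p a bv).
- by move=> x y xy [ya|E]; left => //; [exact: ltI_trans xy ya|rewrite -E].
- move=> b [ba|->] // ab.
  have [c1 c2] := Hp b ab.
  have [bX bY] := (fun n => proj1 (act_below ab n), fun n => proj2 (act_below ab n)).
  have ub : upd p a bv b = p b.
    by rewrite /upd; case: asboolP => // E; subst b; case: (ltI_irr ba).
  have Eb : forall t, below b t -> eval (upd p a bv) t = eval p t.
    move=> t bt; apply: eval_upd_below; apply: below_le bt; by left.
  by split => n; rewrite ub Eb //; [apply: c1|apply: c2].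
- exists q; split => //; split.
    by move=> v va; rewrite Hq; [rewrite /upd; case: asboolP => // E; subst v; case: (ltI_irr va)|left].
  by rewrite Hq; [rewrite /upd; case: asboolP|right].
Qed.

Lemma claim a tu ts r (bv : bool) (Z : nat -> term I) :
  below a tu -> (forall n, below a (Z n)) -> below a r ->
  (forall p, Om p -> eval p tu -> eval p ts -> False) ->
  (forall q, Om q -> q a = bv -> eval q ts = eval q r) ->
  (forall p, (forall n, eval p (Z n)) -> act a -> constr a (upd p a bv)) ->
  exists N, forall p, Om p -> eval p tu -> eval p r -> ~~ eval p (bigM Z N).
Proof.
move=> btu bZ br disj tsr cons; apply: NNPP => N0.
pose c k := match k with 0%N => tu | 1%N => r | k'.+2 => Z k' end.
have [|p [Hp Hc]] := @compact c.
  move=> N; apply: NNPP => NN; apply: N0; exists N => p Hp htu hr.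
  apply/negP => hZ; apply: NN; exists p; split => // -[|[|n]] //= nN.
  have := proj1 (eval_bigM p Z N) hZ n; apply.
  by apply: leq_trans (leqnSn n) _; apply: leq_trans (leqnSn _) nN.
have hZ : forall n, eval p (Z n) by move=> n; exact: (Hc n.+2).
have [q [Oq [qp qa]]] := ext_at Hp (cons p hZ).
have Eq : forall t, below a t -> eval q t = eval p t.
  by move=> t bt; apply: (eval_ext (P := fun v => ltI v a)).
apply: (disj q Oq); first by rewrite Eq //; exact: (Hc 0%N).
by rewrite tsr // Eq //; exact: (Hc 1%N).
Qed.

Lemma bigM_mono p Z N M : (N <= M)%N -> ~~ eval p (bigM Z N) -> ~~ eval p (bigM Z M).
Proof.
move=> NM; apply: contra => /eval_bigM h; apply/eval_bigM => n nN.
by apply: h; exact: leq_trans nN NM.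
Qed.

Lemma allv_bigM (P : I -> Prop) Z N : (forall n, allv P (Z n)) -> allv P (bigM Z N).
Proof. by move=> h; elim: N => //= N IH; split. Qed.

Lemma commute_step a : Defs.commute (Bc a) (Sset a).
Proof.
move=> u s [tu [btu ->]] [ts [hts ->]].
rewrite meetE bmeetE botE => /clsP disj0.
have disj : forall p, Om p -> eval p tu -> eval p ts -> False.
  by move=> p Hp h1 h2; have := disj0 p Hp; rewrite /= h1 h2.
pose r1 := tsub a t1 ts. pose r2 := tsub a t0 ts.
have hr1 : allv (okR a) r1 by apply: allv_tsub.
have hr2 : allv (okR a) r2 by apply: allv_tsub.
have [Z1 [Z2 [hZ1 [hZ2 [cZ1 [cZ2 [oZ1 oZ2]]]]]]] : exists Z1 Z2 : nat -> term I,
  (forall n, allv (okR a) (Z1 n)) /\ (forall n, allv (okR a) (Z2 n)) /\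
   (forall p, (forall n, eval p (Z1 n)) -> act a -> constr a (upd p a true)) /\
   (forall p, (forall n, eval p (Z2 n)) -> act a -> constr a (upd p a false)) /\
   (forall p, Om p -> p a -> forall m, eval p (Z1 m)) /\
   (forall p, Om p -> ~~ p a -> forall m, eval p (Z2 m)).
  case: (pselect (act a)) => aa; last first.
    exists (fun _ => t1), (fun _ => t1).
    by refine (conj _ (conj _ (conj _ (conj _ (conj _ _))))) => // p _ /aa.
  have [bX bY] := (fun n => proj1 (act_below aa n), fun n => proj2 (act_below aa n)).
  exists (Yf a), (fun n => tC (Xf a n)).
  refine (conj _ (conj _ (conj _ (conj _ (conj _ _))))).
  - move=> n; apply: allv_and (bY n) _; apply: allv_impl (allv_inT _) => v h.
    by exists n; right.
  - move=> n; apply: allv_and (bX n) _; apply: allv_impl (allv_inT _) => v h.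
    by exists n; left.
  - move=> p hp _; split => n; first by rewrite /upd; case: asboolP.
    by move=> _; rewrite eval_upd_below.
  - move=> p hp _; split => n; last by rewrite /upd; case: asboolP.
    by rewrite eval_upd_below //; have := hp n; rewrite /=; case: (eval p _).
  - by move=> p Hp pa m; case: (Hp a aa) => _; apply.
  - move=> p Hp npa m /=; apply/negP => h; case: (Hp a aa) => h1 _.
    by move: npa; rewrite (h1 m h).
have sh1 : forall q, Om q -> q a = true -> eval q ts = eval q r1.
  by move=> q _ qa; rewrite (shannon q a ts) qa.
have sh2 : forall q, Om q -> q a = false -> eval q ts = eval q r2.
  by move=> q _ qa; rewrite (shannon q a ts) qa.
have [N1 H1] := @claim a tu ts r1 true Z1 btu
  (fun n => okR_below (hZ1 n)) (okR_below hr1) disj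
  sh1 cZ1.
have [N2 H2] := @claim a tu ts r2 false Z2 btu
  (fun n => okR_below (hZ2 n)) (okR_below hr2) disj
  sh2 cZ2.
pose N := maxn N1 N2.
pose b1 := tM (tJ (tC r1) (tC (bigM Z1 N))) (tJ (tC r2) (tC (bigM Z2 N))).
have hb1 : allv (okR a) b1.
  by rewrite /b1 /=; split; split => //; apply: allv_bigM.
exists (cls b1), (cls (tC b1)); split.
- split; [exists b1; split => //; exact: okR_below|exists b1; split => //; exact: okR_okS].
- split; [exists (tC b1); split => //; exact: okR_below|exists (tC b1); split => //; exact: okR_okS].
- rewrite leE; apply/bleP => p Hp htu /=; apply/andP; split; apply/orP.
    case E: (eval p r1); [right|by left].
    by apply: bigM_mono (H1 p Hp htu E); exact: leq_maxl.
  case E: (eval p r2); [right|by left].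
  by apply: bigM_mono (H2 p Hp htu E); exact: leq_maxr.
- rewrite leE; apply/bleP => p Hp hs /=; rewrite negb_and !negb_or !negbK.
  rewrite (shannon p a ts) in hs.
  case pa: (p a) hs => hs.
    apply/orP; left; rewrite hs /=; apply/eval_bigM => n _; exact: oZ1.
  apply/orP; right; rewrite hs /=; apply/eval_bigM => n _; apply: oZ2 => //; by rewrite pa.
- by rewrite meetE bmeetE; apply/clsP => p _; rewrite [eval p (tM _ _)]/= andbN.
Qed.

Lemma Om_ex : exists p, Om p.
Proof.
have [| |q [Oq _]] := @extend (fun _ => False) (fun _ => false) => //.
by exists q.
Qed.

Lemma gen_step a b A : (forall c, ~ (ltI a c /\ ltI c b)) -> subalgebra A ->
  (forall x, Bc a x \/ Sset a x -> A x) -> forall t, below b t -> A (cls t).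
Proof.
move=> imm [A0 A1 AM AJ AC] HA.
elim=> [v| | |s IHs t IHt|s IHs t IHt|s IHs] /=.
- move=> vb; apply: HA; case: (ltI_trich v a) => [va|[->|av]].
  + by left; exists (tV v).
  + by right; exists (tV a); split => //; left.
  + by case: (imm v).
- by move=> _; exact: A0.
- by move=> _; exact: A1.
- by case=> /IHs h1 /IHt h2; rewrite -bmeetE; exact: AM.
- by case=> /IHs h1 /IHt h2; rewrite -bjoinE; exact: AJ.
- by move=> /IHs h; rewrite -bcomplE; exact: AC.
Qed.

Lemma tsf : tightly_sigma_filtered Bt.
Proof.
exists I, ltI, Bc; split.
- split; first exact: ltI_irr.
  split; first exact: ltI_trans.
  split; first exact: ltI_trich.
  exact: ltI_wf.
- split; first exact: Bc_sub.
  split.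
    by move=> i j ij x [t [bt ->]]; exists t; split => //; apply: below_le bt; left.
  move=> x; elim/clsW: x => t; have [g hg] := below_ex t.
  by exists g, t.
- move=> i Hi x; split.
    move=> [t [bt ->]]; have [p Hp] := Om_ex.
    case E: (eval p t); [right|left]; apply/clsP => q Hq /=;
    by rewrite (below_min Hi bt q p) E.
  by case=> ->; [exists t0|exists t1].
- move=> a ex lim x; split.
    move=> [t [bt ->]]; have [b [ba bb]] := below_limit ex lim bt.
    by exists b; split => //; exists t.
  by move=> [b [ba [t [bt ->]]]]; exists t; split => //; apply: below_le bt; left.
- move=> a; exists (Rset a), (Sset a); split.
  + split; first exact: subalg_I (Bc_sub a) (Sset_sub a).
    have [e He] := Sset_cnt a; exists e => x y [_ hx] [_ hy]; exact: He.
  + by split; [exact: Sset_sub|exact: Sset_cnt].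
  + move=> b ab imm; split.
    * split; first by move=> x [].
      by move=> x [t [bt ->]]; exists t; split => //; apply: below_le bt; left.
    * split; first by move=> x [].
      move=> x [t [ht ->]]; exists t; split => //; apply: allv_impl ht => v [->|[va _]] //.
      exact: ltI_trans va ab.
    * move=> x; split.
        move=> G; apply: G; first exact: Bc_sub.
        move=> y [[t [bt ->]]|[t [ht ->]]]; exists t; split => //.
          by apply: below_le bt; left.
        apply: allv_impl ht => v [->|[va _]] //; exact: ltI_trans va ab.
      move=> [t [bt ->]] A sA HA; exact: gen_step imm sA HA t bt.
    * by move=> x; split.
    * exact: commute_step.
  + by move=> H; case: (ltI_nomax a) => b /H.
Qed.

Lemma csep : countable_separation Bt.
Proof.
move=> X Y [eX HX] [eY HY] XY.
have mk : forall (Z : Bt -> Prop) (e : Bt -> nat) (d : term I),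
    (forall x y, Z x -> Z y -> e x = e y -> x = y) ->
    exists f : nat -> term I, (forall x, Z x -> cls (f (e x)) = x) /\
      (forall n, f n = d \/ Z (cls (f n))).
  move=> Z e d He.
  have H : forall n, exists t : term I,
      ((exists x, Z x /\ e x = n) -> exists x, [/\ Z x, e x = n & t = rep x]) /\
      (~ (exists x, Z x /\ e x = n) -> t = d).
    move=> n; case: (pselect (exists x, Z x /\ e x = n)) => [[x [Zx exn]]|N].
      by exists (rep x); split => [_|N]; [exists x|case: N; exists x].
    by exists d; split => // h; case: N.
  have [f Hf] := choice H.
  exists f; split.
    move=> x Zx; case: (Hf (e x)) => [h _].
    have [y [Zy ey ->]] := h (ex_intro _ x (conj Zx erefl)).
    by rewrite repK; apply: He.
  move=> n; case: (Hf n) => [h1 h2]; case: (pselect (exists x, Z x /\ e x = n)) => [/h1 [y [Zy _ ->]]|/h2 ->].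
    by right; rewrite repK.
  by left.
have [fX [fX1 fX2]] := mk X eX t0 HX.
have [fY [fY1 fY2]] := mk Y eY t1 HY.
have ord : forall n m p, Om p -> eval p (fX n) -> eval p (fY m).
  move=> n m p Hp; case: (fX2 n) => [->//|Xn]; case: (fY2 m) => [->//|Ym].
  by have := XY _ _ Xn Ym; rewrite leE => /bleP; apply.
have [g [bg [EX EY]]] := bookkeeping fX fY.
have ag : act g.
  apply: act_intro; first by move=> n; rewrite EX EY; exact: bg.
  move=> p Hp n m; rewrite EX EY => h.
  have [| |q [Oq qp]] := @extend (fun v => ltI v g) p.
  - by move=> x y xy yg; exact: ltI_trans xy yg.
  - exact: Hp.
  have Eq : forall t, below g t -> eval q t = eval p t.
    by move=> t bt; apply: (eval_ext (P := fun v => ltI v g)).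
  rewrite -Eq; last exact: (proj2 (bg m)).
  by apply: (ord n m q Oq); rewrite Eq; [exact: h|exact: (proj1 (bg n))].
exists (cls (tV g)); split.
  move=> x Xx; rewrite -(fX1 x Xx) leE; apply/bleP => p Hp h.
  by case: (Hp g ag) => c1 _; apply: (c1 (eX x)); rewrite EX.
move=> y Yy; rewrite -(fY1 y Yy) leE; apply/bleP => p Hp h.
by case: (Hp g ag) => _ c2; have := c2 (eY y) h; rewrite EY.
Qed.

From mathcomp Require Import classical_sets functions cardinality.
Local Open Scope classical_set_scope.
Local Open Scope card_scope.

Lemma free_distinct i j : ltI i j ->
  (forall p n, eval p (Xf j n) = false /\ eval p (Yf j n) = true) ->
  cls (tV i) <> cls (tV j).
Proof.
move=> ij fr E.
have [p0 Hp0] := Om_ex.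
have [|q [Oq [qp qa]]] := @ext_at j p0 (~~ p0 i) Hp0.
  by move=> _; split => n; [rewrite (proj1 (fr _ n))|rewrite (proj2 (fr _ n))].
have := proj1 (clsP _ _) E q Oq; rewrite /= qa qp //; by case: (p0 i).
Qed.

Lemma enc2_inj : injective (fun w : W => cls (tV (hF w))).
Proof.
move=> w w' E; apply: hF_inj.
case: (ltI_trich (hF w) (hF w')) => [h|[//|h]].
  by case: (free_distinct h (fun p n => hF_free w' n p)).
by case: (free_distinct h (fun p n => hF_free w n p)).
Qed.

Lemma enc1_inj : injective (fun x : Bt => encT (rep x)).
Proof. by move=> x y /encT_inj E; rewrite -(repK x) -(repK y) E. Qed.

HB.instance Definition _ := isPointed.Build Bt bbot.

Lemma card_Bt : exists f : Bt -> W, bijective f.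
Proof.
have h1 : [set: Bt] #<= [set: W].
  by apply/pcard_injP; exists (fun x : Bt => encT (rep x)) => x y _ _; exact: enc1_inj.
have h2 : [set: W] #<= [set: Bt].
  by apply/pcard_injP; exists (fun w : W => cls (tV (hF w))) => x y _ _; exact: enc2_inj.
have /card_set_bijP [f [_ finj fsurj]] := Cantor_Bernstein h1 h2.
have inj : injective f by move=> x y; apply: finj; rewrite inE.
have su : forall y, exists x, f x = y.
  by move=> y; have [x _ fx] := fsurj y Logic.I; exists x.
have [g hg] := choice su.
exists f, g; first by move=> x; apply: inj; rewrite hg.
exact: hg.
Qed.

Theorem proposition2p2 :
  exists (disp : Order.disp_t) (B : ctbDistrLatticeType disp),
    (exists f : B -> (nat -> bool), bijective f) /\
    tightly_sigma_filtered B /\ countable_separation B.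
Proof.
exists dsp, Bt; split; first exact: card_Bt.
by split; [exact: tsf|exact: csep].
Qed.
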